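(* Let $\ell\ge2$ and $n\ge1$ be integers such that either $\gcd(\ell,n)=1$ or $\ell$ is prime. Then the number of switching equivalence classes in $\mathrm{Alt}_n(\mathbb{Z}/\ell\mathbb{Z})$ equals the number of isomorphism classes of modular Eulerian matrices in $\mathrm{Alt}_n(\mathbb{Z}/\ell\mathbb{Z})$.
   Context: $\mathrm{Alt}_n(\mathbb{Z}/\ell\mathbb{Z})$ is the set of $n\times n$ matrices $M=(m_{ij})$ over $\mathbb{Z}/\ell\mathbb{Z}$ with $m_{ii}=0$ and $m_{ij}+m_{ji}=0$. For $v\in[n]$ let $X_v$ be the matrix with $(X_v)_{iv}=1$ and $(X_v)_{vi}=-1$ for all $i\ne v$ and all other entries $0$; the switching at $v$ is $\mu_v(M)=M+X_v$. $M\cong M'$ means there is $\sigma\in\mathfrak{S}_n$ with $m'_{\sigma(i)\sigma(j)}=m_{ij}$ for all $i,j$. $M,M'$ are switching equivalent if there are positive integers $i_1,\dots,i_n$ with $M'\cong\mu_1^{i_1}\cdots\mu_n^{i_n}(M)$. $M$ is a modular Eulerian matrix if $\sum_{j=1}^n m_{ij}=0$ in $\mathbb{Z}/\ell\mathbb{Z}$ for every $i$. *)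

(* Defs.v *)
From HB Require Import structures.
From mathcomp Require Import all_boot all_order all_algebra all_fingroup.
From mathcomp Require Import boolp.
Set Implicit Arguments. Unset Strict Implicit. Unset Printing Implicit Defensive.
Import GRing.Theory.
Local Open Scope ring_scope.

Section Defs.
Variables (l n : nat).
Local Notation M := 'M['Z_l]_n.

(* Alt_n(Z/lZ): zero diagonal, antisymmetric. ('Z_l is Z/lZ for l >= 2.) *)
Definition Alt : {set M} :=
  [set A : M | [forall i, A i i == 0] && [forall i, forall j, A i j + A j i == 0]].

Definition Xsw (v : 'I_n) : M :=
  \matrix_(i, j) (if (j == v) && (i != v) then 1
                  else if (i == v) && (j != v) then -1 else 0).

Definition mu (v : 'I_n) (A : M) : M := A + Xsw v.

Definition switch_all (e : 'I_n -> nat) (A : M) : M :=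
  foldr (fun v B => iter (e v) (mu v) B) A (enum 'I_n).

Definition iso (A B : M) : Prop :=
  exists s : 'S_n, forall i j, B (s i) (s j) = A i j.

Definition switch_equiv (A A' : M) : Prop :=
  exists e : 'I_n -> nat, (forall v, (0 < e v)%N) /\ iso A' (switch_all e A).

Definition eulerian (A : M) : bool := [forall i, \sum_j A i j == 0].

Definition num_switch_classes : nat :=
  #|[set [set B in Alt | `[< switch_equiv A B >]] | A in Alt]|.

Definition EulAlt : {set M} := [set A in Alt | eulerian A].
Definition num_iso_eulerian_classes : nat :=
  #|[set [set B in EulAlt | `[< iso A B >]] | A in EulAlt]|.
End Defs.

(* Main.v *)
Require Import Defs.
From HB Require Import structures.
From mathcomp Require Import all_boot all_order all_algebra all_fingroup.
From mathcomp Require Import boolp ring zify.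
Set Implicit Arguments. Unset Strict Implicit. Unset Printing Implicit Defensive.
Import GRing.Theory.
Local Open Scope ring_scope.

Section Gen.
Variables (R : finComUnitRingType) (n : nat).
Local Notation M := 'M[R]_n.
Implicit Types (A B C : M) (s t : {perm 'I_n}) (c d : 'rV[R]_n).

Definition AltG : {set M} :=
  [set A : M | [forall i, A i i == 0] && [forall i, forall j, A i j + A j i == 0]].
Definition XswG (v : 'I_n) : M :=
  \matrix_(i, j) (if (j == v) && (i != v) then 1
                  else if (i == v) && (j != v) then -1 else 0).
Definition muG (v : 'I_n) (A : M) : M := A + XswG v.
Definition switch_allG (e : 'I_n -> nat) (A : M) : M :=
  foldr (fun v B => iter (e v) (muG v) B) A (enum 'I_n).
Definition isoG (A B : M) : Prop :=
  exists s : 'S_n, forall i j, B (s i) (s j) = A i j.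
Definition switch_equivG (A A' : M) : Prop :=
  exists e : 'I_n -> nat, (forall v, (0 < e v)%N) /\ isoG A' (switch_allG e A).
Definition eulerianG (A : M) : bool := [forall i, \sum_j A i j == 0].
Definition num_switch_classesG : nat :=
  #|[set [set B in AltG | `[< switch_equivG A B >]] | A in AltG]|.
Definition EulAltG : {set M} := [set A in AltG | eulerianG A].
Definition num_iso_eulerian_classesG : nat :=
  #|[set [set B in EulAltG | `[< isoG A B >]] | A in EulAltG]|.

Definition Xc (c : 'rV[R]_n) : M := \matrix_(i, j) (c 0 j - c 0 i).
Definition act (A : M) (s : 'S_n) : M := \matrix_(i, j) A ((s^-1)%g i) ((s^-1)%g j).

Lemma XswE v i j : XswG v i j = (v == j)%:R - (v == i)%:R.
Proof.
rewrite mxE; case: (eqVneq j v) => [hj|hj]; case: (eqVneq i v) => [hi|hi] /=;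
  by rewrite ?subrr ?subr0 ?sub0r.
Qed.

Lemma sum_delta (F : 'I_n -> R) j : \sum_v F v * (v == j)%:R = F j.
Proof.
rewrite (bigD1 j) //= eqxx mulr1 big1 ?addr0 // => v /negbTE ->; by rewrite mulr0.
Qed.

Lemma sumXsw (c : 'rV[R]_n) : \sum_v c 0 v *: XswG v = Xc c.
Proof.
apply/matrixP=> i j; rewrite summxE !mxE.
under eq_bigr do rewrite mxE XswE mulrBr.
by rewrite sumrB !sum_delta.
Qed.

Lemma iter_mu k v A : iter k (muG v) A = A + k%:R *: XswG v.
Proof.
elim: k => [|k IH] /=; first by rewrite scale0r addr0.
by rewrite IH /muG -addrA -[in RHS]addn1 natrD scalerDl scale1r.
Qed.

Lemma switch_allE e A : switch_allG e A = A + Xc (\row_v (e v)%:R).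
Proof.
rewrite -sumXsw /switch_allG.
have -> : \sum_v (\row_v0 (e v0)%:R : 'rV[R]_n) 0 v *: XswG v =
          \sum_(v <- enum 'I_n) (e v)%:R *: XswG v.
  by rewrite big_enum /=; apply: eq_bigr => v _; rewrite mxE.
elim: (enum 'I_n) => [|v r IH] /=; first by rewrite big_nil addr0.
by rewrite big_cons iter_mu IH -addrA [in X in A + X]addrC.
Qed.

Lemma isoP A B : isoG A B <-> exists s, B = act A s.
Proof.
split=> [[s hs]|[s ->]]; exists s.
  by apply/matrixP=> i j; rewrite mxE -hs !permKV.
by move=> i j; rewrite mxE !permK.
Qed.

Variable ek : R -> nat.
Hypothesis ek_pos : forall x, (0 < ek x)%N.
Hypothesis ekE : forall x, (ek x)%:R = x.

Lemma switch_equivP A B : switch_equivG A B <-> exists c s, A + Xc c = act B s.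
Proof.
split=> [[e [_ /isoP [s hs]]]|[c [s hs]]].
  by exists (\row_v (e v)%:R), s; rewrite -switch_allE.
exists (fun v => ek (c 0 v)); split=> //; apply/isoP; exists s.
rewrite switch_allE -hs; congr (_ + Xc _); apply/rowP=> v; by rewrite mxE ekE.
Qed.


Lemma actD A B s : act (A + B) s = act A s + act B s.
Proof. by apply/matrixP=> i j; rewrite !mxE. Qed.
Lemma actN A s : act (- A) s = - act A s.
Proof. by apply/matrixP=> i j; rewrite !mxE. Qed.
Lemma act1 A : act A 1 = A.
Proof. by apply/matrixP=> i j; rewrite mxE invg1 !perm1. Qed.
Lemma actM A s t : act (act A s) t = act A (s * t).
Proof. by apply/matrixP=> i j; rewrite !mxE invMg !permM. Qed.
Lemma actK A s : act (act A s) (s^-1)%g = A.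
Proof. by rewrite actM mulgV act1. Qed.
Lemma act_Xc c s : act (Xc c) s = Xc (\row_v c 0 ((s^-1)%g v)).
Proof. by apply/matrixP=> i j; rewrite !mxE. Qed.
Lemma XcD c d : Xc c + Xc d = Xc (c + d).
Proof. by apply/matrixP=> i j; rewrite !mxE opprD addrACA. Qed.
Lemma XcN c : - Xc c = Xc (- c).
Proof. by apply/matrixP=> i j; rewrite !mxE opprB opprK addrC. Qed.
Lemma Xc0 : Xc 0 = 0.
Proof. by apply/matrixP=> i j; rewrite !mxE subrr. Qed.

Lemma se_refl A : switch_equivG A A.
Proof. by apply/switch_equivP; exists 0, 1%g; rewrite Xc0 addr0 act1. Qed.

Lemma se_sym A B : switch_equivG A B -> switch_equivG B A.
Proof.
move=> /switch_equivP [c [s hs]]; apply/switch_equivP.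
have hB : B = act A (s^-1)%g + act (Xc c) (s^-1)%g by rewrite -actD hs actK.
exists (- (\row_v c 0 (((s^-1)^-1)%g v))), (s^-1)%g.
by rewrite hB act_Xc -addrA XcD subrr Xc0 addr0.
Qed.

Lemma se_trans A B C : switch_equivG A B -> switch_equivG B C -> switch_equivG A C.
Proof.
move=> /switch_equivP [c [s hs]] /switch_equivP [d [t ht]]; apply/switch_equivP.
have hB : B = act C t - Xc d by rewrite -ht addrK.
exists (c + \row_v d 0 ((s^-1)%g v)), (t * s)%g.
by rewrite -XcD addrA hs hB actD actN act_Xc actM subrK.
Qed.

Lemma sum_antisym (f : 'I_n -> 'I_n -> R) : (forall i, f i i = 0) ->
  (forall i j, f i j + f j i = 0) -> \sum_i \sum_j f i j = 0.
Proof.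
move=> f0 fA.
have e i j : f i j = (if (i < j)%N then f i j else 0) + (if (j < i)%N then f i j else 0).
  case: (ltngtP i j) => h; rewrite ?addr0 ?add0r //.
  by have -> : i = j by apply: val_inj. 
under eq_bigr do under eq_bigr do rewrite e.
under eq_bigr do rewrite big_split /=.
rewrite big_split /= [X in _ + X]exchange_big /= -big_split /= big1 // => i _.
rewrite -big_split big1 // => j _ /=.
by case: ifP => _; rewrite ?addr0 ?fA.
Qed.

Lemma AltP A : reflect ((forall i, A i i = 0) /\ (forall i j, A i j + A j i = 0)) (A \in AltG).
Proof.
rewrite inE; apply: (iffP andP) => [[/forallP h1 /forallP h2]|[h1 h2]]; split.
- by move=> i; apply/eqP.
- by move=> i j; apply/eqP; have /forallP := h2 i.
- by apply/forallP=> i; rewrite h1.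
- by apply/forallP=> i; apply/forallP=> j; rewrite h2.
Qed.

Lemma Alt_sum A : A \in AltG -> \sum_i \sum_j A i j = 0.
Proof. by move=> /AltP [h1 h2]; apply: sum_antisym. Qed.

Lemma Alt_act A s : A \in AltG -> act A s \in AltG.
Proof. by move=> /AltP [h1 h2]; apply/AltP; split=> *; rewrite !mxE. Qed.

Lemma Alt_D A B : A \in AltG -> B \in AltG -> A + B \in AltG.
Proof.
move=> /AltP [h1 h2] /AltP [h3 h4]; apply/AltP; split=> *; rewrite !mxE.
  by rewrite h1 h3 addr0.
by rewrite addrACA h2 h4 addr0.
Qed.

Lemma Alt_Xc c : Xc c \in AltG.
Proof. apply/AltP; split=> *; rewrite !mxE ?subrr //; by rewrite addrC subrKA subrr. Qed.

Lemma rowsum_act A s i : \sum_j act A s i j = \sum_j A ((s^-1)%g i) j.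
Proof.
under eq_bigr do rewrite mxE.
by rewrite (reindex_inj (@perm_inj _ s)) /=; apply: eq_bigr => j _; rewrite permK.
Qed.

Lemma eulerianP A : reflect (forall i, \sum_j A i j = 0) (eulerianG A).
Proof. by apply: (iffP forallP) => h i; [apply/eqP|rewrite h]. Qed.

Lemma eul_act A s : eulerianG A -> eulerianG (act A s).
Proof. by move=> /eulerianP h; apply/eulerianP=> i; rewrite rowsum_act h. Qed.

Lemma EulAlt_act A s : A \in EulAltG -> act A s \in EulAltG.
Proof. by move=> /setIdP [h1 h2]; apply/setIdP; rewrite Alt_act ?eul_act. Qed.

Lemma rowsum_Xc c i : \sum_j Xc c i j = \sum_j c 0 j - c 0 i *+ n.
Proof. by under eq_bigr do rewrite mxE; rewrite sumrB sumr_const card_ord. Qed.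

Lemma count_classes (T : finType) (S E : {set T}) (r1 r2 : T -> T -> bool) :
  E \subset S -> (forall x, x \in S -> exists2 y, y \in E & r1 x y) ->
  (forall x y z, r1 x y -> r1 y z -> r1 x z) -> (forall x y, r1 x y -> r1 y x) ->
  (forall x, r1 x x) -> {in E &, forall x y, r1 x y = r2 x y} ->
  #|[set [set y in S | r1 x y] | x in S]| = #|[set [set y in E | r2 x y] | x in E]|.
Proof.
move=> sES ex tr sy rf e12.
pose C1 x := [set y in S | r1 x y].
have eqC x y : r1 x y -> C1 x = C1 y.
  move=> hxy; apply/setP=> z; rewrite !inE; case: (z \in S) => //=.
  by apply/idP/idP => h; [apply: tr (sy _ _ hxy) h | apply: tr hxy h].
have h1 : [set C1 x | x in S] = [set C1 x | x in E].
  apply/setP=> C; apply/imsetP/imsetP => [[x xS ->]|[x xE ->]].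
    by have [y yE hxy] := ex x xS; exists y => //; apply: eqC.
  by exists x => //; apply: (subsetP sES).
have h2 : [set [set y in E | r2 x y] | x in E] = [set C :&: E | C in [set C1 x | x in E]].
  rewrite -imset_comp; apply: eq_in_imset => x xE /=; apply/setP=> y; rewrite !inE.
  case yE: (y \in E); rewrite ?andbF ?andbT //=.
  by rewrite (subsetP sES) //= e12.
rewrite /C1 h1 -/C1 h2; symmetry; apply: card_in_imset => C D /imsetP [x xE ->] /imsetP [y yE ->] hC.
apply: eqC; have : y \in C1 y :&: E by rewrite !inE yE rf (subsetP sES).
by rewrite -hC !inE => /andP [/andP [_ ->]].
Qed.

Section Coprime.
Hypothesis hn : (n%:R : R) \is a GRing.unit.

Lemma coprime_case : num_switch_classesG = num_iso_eulerian_classesG.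
Proof.
apply: count_classes.
- by apply/subsetP=> A; rewrite inE => /andP [].
- move=> A AA; pose c := \row_i ((\sum_j A i j) / n%:R).
  exists (A + Xc c); last first.
    by apply/asboolP/switch_equivP; exists c, 1%g; rewrite act1.
  rewrite inE Alt_D ?Alt_Xc //=; apply/eulerianP=> i.
  rewrite (eq_bigr (fun j => A i j + Xc c i j)); last by move=> j _; rewrite [LHS]mxE.
  rewrite big_split /= rowsum_Xc.
  have -> : \sum_j c 0 j = 0.
    by under eq_bigr do rewrite mxE; rewrite -mulr_suml Alt_sum // mul0r.
  by rewrite sub0r [c 0 i]mxE -[(_ / _) *+ n]mulr_natr divrK // subrr.
- by move=> x y z /asboolP h1 /asboolP h2; apply/asboolP; apply: se_trans h1 h2.
- by move=> x y /asboolP h; apply/asboolP; apply: se_sym.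
- by move=> x; apply/asboolP; apply: se_refl.
- move=> A B /setIdP [AA eA] /setIdP [BA eB].
  apply/asboolP/asboolP => [/switch_equivP [c [s hs]]|/isoP [s ->]].
    have hc : forall i, \sum_j Xc c i j = 0.
      move=> i; have := eul_act s eB; move/eulerianP/(_ i).
      rewrite -hs (eq_bigr (fun j => A i j + Xc c i j)); last by move=> j _; rewrite [LHS]mxE.
      by rewrite big_split /= (eulerianP _ eA) add0r.
    have e0 : Xc c = 0.
      apply/matrixP=> i j; rewrite !mxE.
      have := hc i; have := hc j; rewrite !rowsum_Xc => /eqP; rewrite subr_eq0 => /eqP h1.
      move/eqP; rewrite subr_eq0 => /eqP; rewrite h1 -[c 0 j *+ n]mulr_natr -[c 0 i *+ n]mulr_natr => /(mulIr hn) ->.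
      by rewrite subrr.
    apply/isoP; exists (s^-1)%g; by rewrite e0 addr0 in hs; rewrite hs actK.
  by apply/switch_equivP; exists 0, (s^-1)%g; rewrite Xc0 addr0 actK.
Qed.
End Coprime.

End Gen.

Section LA.
Variables (F : finFieldType) (N : nat).

Lemma card_rowspace m (A : 'M[F]_(m, N)) :
  #|[set v : 'rV[F]_N | (v <= A)%MS]| = (#|F| ^ \rank A)%N.
Proof.
have -> : [set v : 'rV[F]_N | (v <= A)%MS] = [set w *m row_base A | w : 'rV_(\rank A)].
  apply/setP=> v; rewrite inE; apply/idP/imsetP => [|[w _ ->]].
    by rewrite -(eq_row_base A) => /submxP [w ->]; exists w.
  by rewrite -(eq_row_base A) submxMl.
rewrite card_imset; last exact: row_free_inj (row_base_free A).
by rewrite card_mx mul1n.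
Qed.

Lemma arith (N0 a b c d e : nat) : (a + b = c -> d + b = c + e -> c <= N0 -> d <= N0 -> N0 - a = e + (N0 - d))%N.
Proof. lia. Qed.

Lemma key_count (P Q : 'M[F]_N) m (K : 'M[F]_(m, N)) :
  P *m Q = 1%:M -> Q *m P = 1%:M -> P^T = Q ->
  #|[set v : 'rV_N | (v *m (P - 1%:M) <= K)%MS]| =
  (#|[set v : 'rV_N | (v <= K)%MS]| *
   #|[set v : 'rV_N | (v *m (P - 1%:M) == 0%R) && (v *m K^T == 0%R)]|)%N.
Proof.
move=> PQ QP PtQ; set T := P - 1%:M.
have -> : [set v : 'rV_N | (v *m T <= K)%MS] =
          [set v : 'rV_N | (v <= kermx (T *m cokermx K))%MS].
  by apply/setP=> v; rewrite !inE sub_kermx mulmxA -submxE.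
have -> : [set v : 'rV_N | (v *m T == 0%R) && (v *m K^T == 0%R)] =
          [set v : 'rV_N | (v <= kermx (row_mx T K^T))%MS].
  by apply/setP=> v; rewrite !inE sub_kermx mul_mx_row row_mx_eq0.
rewrite !card_rowspace -expnD; congr (_ ^ _)%N.
have TtT : (T^T <= T)%MS.
  have -> : T^T = - (Q *m T) by rewrite /T linearB /= trmx1 PtQ mulmxBr QP mulmx1 opprB.
  by rewrite eqmx_opp submxMl.
have TTt : (T <= T^T)%MS.
  have eT : T = - (P *m T^T).
    by rewrite /T linearB /= trmx1 PtQ mulmxBr PQ mulmx1 opprB.
  by rewrite {1}eT eqmx_opp submxMl.
have kc : (kermx (cokermx K) :=: K)%MS.
  apply/eqmxP; rewrite /eqmx -/(submx _ _) ; apply/andP; split.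
    by rewrite submxE mulmx_ker.
  by rewrite sub_kermx mulmx_coker.
have e1 := mxrank_mul_ker T (cokermx K).
have e2 : \rank (T :&: kermx (cokermx K)) = \rank (T :&: K).
  by apply/eqP; rewrite eqn_leq !mxrankS // capmxS // kc.
have e3 := mxrank_sum_cap T^T K.
have e4 : \rank (T^T :&: K) = \rank (T :&: K).
  by apply/eqP; rewrite eqn_leq !mxrankS // capmxS.
have e5 : \rank (row_mx T K^T) = \rank (T^T + K)%MS.
  by rewrite -mxrank_tr tr_row_mx trmxK addsmxE.
rewrite !mxrank_ker e5; rewrite mxrank_tr in e3.
rewrite e2 in e1; rewrite e4 in e3.
exact: arith e1 e3 (rank_leq_col T) (rank_leq_col (T^T + K)%MS).
Qed.
End LA.

Lemma mul_rV_lin1G (F : comRingType) m p (f : 'rV[F]_m -> 'rV[F]_p) :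
  (forall a u v, f (a *: u + v) = a *: f u + f v) -> forall u, u *m lin1_mx f = f u.
Proof.
move=> hf u.
pose g : {linear 'rV[F]_m -> 'rV[F]_p} := HB.pack f (GRing.isLinear.Build _ _ _ _ f hf).
exact: (mul_rV_lin1 g).
Qed.

Section Prime.
Variables (F : finFieldType) (n : nat).
Local Notation M := 'M[F]_n.
Local Notation N := (n * n)%N.
Local Notation Alt_ := (AltG F n).
Local Notation EulAlt_ := (EulAltG F n).
Implicit Types (A B C Y : M) (s t : {perm 'I_n}) (c d : 'rV[F]_n) (u v : 'rV[F]_N).

Definition actv s v : 'rV[F]_N := mxvec (act (vec_mx v) s).
Definition Pm s : 'M[F]_N := lin1_mx (actv s).

Lemma act_lin s a A B : act (a *: A + B) s = a *: act A s + act B s.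
Proof. by apply/matrixP=> i j; rewrite !mxE. Qed.

Lemma Pm_mul s v : v *m Pm s = actv s v.
Proof.
apply: mul_rV_lin1G => a u w.
by rewrite /actv linearP act_lin linearP.
Qed.

Lemma Pm_mulmx s t : Pm s *m Pm t = Pm (s * t).
Proof.
by apply/row_matrixP=> i; rewrite !rowE mulmxA !Pm_mul /actv mxvecK actM.
Qed.

Lemma Pm1 : Pm 1 = 1%:M.
Proof. by apply/row_matrixP=> i; rewrite !rowE Pm_mul mulmx1 /actv act1 vec_mxK. Qed.

Lemma Pm_inv s : Pm s *m Pm (s^-1)%g = 1%:M.
Proof. by rewrite Pm_mulmx mulgV Pm1. Qed.
Lemma Pm_inv' s : Pm (s^-1)%g *m Pm s = 1%:M.
Proof. by rewrite Pm_mulmx mulVg Pm1. Qed.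

Lemma eq_inv s (i j : 'I_n) : ((s^-1)%g i == j) = (s j == i).
Proof. by rewrite -(inj_eq (@perm_inj _ s)) permKV eq_sym. Qed.

Lemma Pm_tr s : (Pm s)^T = Pm (s^-1)%g.
Proof.
apply/matrixP=> k k'; rewrite !mxE.
case/mxvec_indexP: k => i j; case/mxvec_indexP: k' => i' j'.
rewrite /actv !vec_mx_delta !mxvecE !mxE invgK !eq_inv.
by [].
Qed.

Definition piv v : 'rV[F]_N := mxvec (vec_mx v - (vec_mx v)^T).
Definition Symm : 'M[F]_N := kermx (lin1_mx piv).

Lemma Symm_mem v : (v <= Symm)%MS = (vec_mx v == (vec_mx v)^T).
Proof.
rewrite sub_kermx mul_rV_lin1G; last first.
  move=> a u w; rewrite /piv -linearP; congr mxvec.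
  rewrite linearP /=; apply/matrixP=> i j; rewrite !mxE.
  by rewrite mulrBr opprD addrACA.
by rewrite /piv mxvec_eq0 subr_eq0.
Qed.

Definition Cmat c : M := \matrix_(i, j) c 0 j.
Definition Cm : 'M[F]_(n, N) := lin1_mx (fun c => mxvec (Cmat c)).

Lemma Cm_mul c : c *m Cm = mxvec (Cmat c).
Proof.
apply: mul_rV_lin1G => a u w; rewrite -linearP; congr mxvec.
by apply/matrixP=> i j; rewrite !mxE.
Qed.

Lemma CmatX c : Cmat c - (Cmat c)^T = Xc c.
Proof. by apply/matrixP=> i j; rewrite !mxE. Qed.

Definition Km := col_mx Symm Cm.

Lemma Km_mem Y : (mxvec Y <= Km)%MS <-> exists c, Y - Y^T = Xc c.
Proof.
rewrite /Km -addsmxE; split.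
  move/sub_addsmxP=> [[u w] /= hY].
  have hS : (u *m Symm <= Symm)%MS by apply: submxMl.
  rewrite Symm_mem in hS; exists w.
  have -> : Y = vec_mx (u *m Symm) + Cmat w by rewrite -(mxvecK Y) hY linearD /= Cm_mul mxvecK.
  rewrite linearD /= -(eqP hS) opprD addrACA subrr add0r; exact: CmatX.
move=> [c hc]; apply/sub_addsmxP.
have hS : (mxvec (Y - Cmat c) <= Symm)%MS.
  rewrite Symm_mem mxvecK; apply/eqP/matrixP=> i j.
  move/matrixP: hc => /(_ i j); rewrite !mxE => h.
  have -> : Y i j = Y j i + (c 0 j - c 0 i) by rewrite -h; ring.
  ring.
have [w hw] := submxP hS.
exists (w, c) => /=; rewrite -hw Cm_mul -linearD /=; by rewrite subrK.
Qed.


Lemma pairing A B : (mxvec A *m (mxvec B)^T) 0 0 = \sum_i \sum_j A i j * B i j.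
Proof.
rewrite mxE (reindex (uncurry (@mxvec_index n n))) /=; last first.
  by apply: onW_bij; case: (curry_mxvec_bij n n) => g h1 h2; exists g => x; [apply: h1|apply: h2].
rewrite pair_big /=; apply: eq_bigr => -[i j] _ /=.
by rewrite mxE !mxvecE.
Qed.

Lemma perpP m (A : 'M[F]_(m, N)) v :
  reflect (forall u, (u <= A)%MS -> (v *m u^T) 0 0 = 0) (v *m A^T == 0).
Proof.
apply: (iffP eqP) => [h u /submxP [w ->]|h].
  by rewrite trmx_mul mulmxA h mul0mx mxE.
apply/rowP=> i; have := h (row i A) (row_sub i A).
by rewrite rowE trmx_mul trmx_delta mulmxA -colE mxE => ->; rewrite mxE.
Qed.

Lemma sum_delta2 B (i j : 'I_n) : \sum_a \sum_b B a b * delta_mx i j a b = B i j.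
Proof.
rewrite (bigD1 i) //= [X in _ + X]big1 => [|a /negbTE ha]; last first.
  by rewrite big1 // => b _; rewrite mxE ha mulr0.
rewrite addr0 (bigD1 j) //= [X in _ + X]big1 => [|b /negbTE hb]; last first.
  by rewrite mxE hb andbF mulr0.
by rewrite addr0 mxE !eqxx mulr1.
Qed.

Lemma sum_deltaR (G : 'I_n -> F) j : \sum_b G b * (delta_mx 0 j : 'rV[F]_n) 0 b = G j.
Proof.
rewrite (bigD1 j) //= [X in _ + X]big1 => [|b /negbTE hb]; last first.
  by rewrite mxE hb andbF mulr0.
by rewrite addr0 mxE !eqxx mulr1.
Qed.

Lemma perp_Symm B : (mxvec B *m Symm^T == 0) = (B \in Alt_).
Proof.
apply/perpP/AltP => [h|[h1 h2] u].
  have hd : forall i j, (mxvec B *m (mxvec (delta_mx i j))^T) 0 0 = B i j.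
    by move=> i j; rewrite pairing sum_delta2.
  split=> [i|i j].
    by rewrite -hd h // Symm_mem mxvecK trmx_delta.
  have := h (mxvec (delta_mx i j + delta_mx j i)).
  rewrite Symm_mem mxvecK linearD /= !trmx_delta addrC eqxx => /(_ isT).
  rewrite pairing => <-; symmetry.
  have e a b : B a b * (delta_mx j i + delta_mx i j) a b =
               B a b * delta_mx i j a b + B a b * delta_mx j i a b.
    by rewrite [X in _ * X]mxE mulrDr addrC.
  under eq_bigr do under eq_bigr do rewrite e.
  by under eq_bigr do rewrite big_split /=; rewrite big_split /= !sum_delta2.
rewrite Symm_mem => /eqP hS; rewrite -(vec_mxK u) pairing.
apply: sum_antisym => [i|i j]; first by rewrite h1 mul0r.
have hS' a b : vec_mx u b a = vec_mx u a b.
  by have /matrixP /(_ b a) := hS; rewrite [X in _ = X -> _]mxE.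
by rewrite [vec_mx u j i]hS' -mulrDl h2 mul0r.
Qed.

Lemma colsum_Alt B j : B \in Alt_ -> \sum_i B i j = - \sum_i B j i.
Proof.
move=> /AltP [_ h2]; rewrite -sumrN; apply: eq_bigr => i _.
by apply/eqP; rewrite -addr_eq0 addrC h2.
Qed.

Lemma perp_Cm B : B \in Alt_ -> (mxvec B *m Cm^T == 0) = eulerianG B.
Proof.
move=> BA; apply/perpP/eulerianP => [h j|h u /submxP [w ->]].
  have := h (delta_mx 0 j *m Cm) (submxMl _ _).
  rewrite Cm_mul pairing => hc.
  apply/eqP; rewrite -oppr_eq0 -colsum_Alt //; apply/eqP; apply: (etrans _ hc).
  apply: eq_bigr => a _; symmetry.
  under eq_bigr do rewrite [Cmat _ _ _]mxE.
  exact: sum_deltaR.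
rewrite Cm_mul pairing exchange_big /= big1 // => j _.
under eq_bigr do rewrite mxE.
by rewrite -mulr_suml colsum_Alt // h oppr0 mul0r.
Qed.

Lemma perp_Km B : (mxvec B *m Km^T == 0) = (B \in EulAlt_).
Proof.
rewrite /Km tr_col_mx mul_mx_row row_mx_eq0 perp_Symm.
apply/idP/setIdP => [/andP [h1 h2]|[h1 h2]].
  by split=> //; rewrite -perp_Cm.
by rewrite h1 perp_Cm.
Qed.


Lemma act_tr A s : (act A s)^T = act A^T s.
Proof. by apply/matrixP=> i j; rewrite !mxE. Qed.

Lemma actB A B s : act (A - B) s = act A s - act B s.
Proof. by rewrite actD actN. Qed.

Lemma K_act Y s : (mxvec Y <= Km)%MS -> (mxvec (act Y s) <= Km)%MS.
Proof.
move=> /Km_mem [c hc]; apply/Km_mem; exists (\row_v c 0 ((s^-1)%g v)).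
by rewrite act_tr -actB hc act_Xc.
Qed.

Lemma K_sub Y Z : (mxvec Y <= Km)%MS -> (mxvec Z <= Km)%MS -> (mxvec (Y - Z) <= Km)%MS.
Proof. by move=> hY hZ; rewrite linearB /= addmx_sub // eqmx_opp. Qed.

Lemma K_add Y Z : (mxvec Y <= Km)%MS -> (mxvec Z <= Km)%MS -> (mxvec (Y + Z) <= Km)%MS.
Proof. by move=> hY hZ; rewrite linearD /= addmx_sub. Qed.

Lemma zid (V : zmodType) (a b c d : V) : a - c = (a - b + (b - d)) - (c - d).
Proof. by rewrite addrA subrK opprB addrA subrK. Qed.

Lemma zid2 (V : zmodType) (a b c d : V) : (a - b) - (c - d) = (a - c) - (b - d).
Proof. by rewrite !opprB addrACA [in RHS]addrACA [- b + _]addrC. Qed.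

Lemma K0 : (mxvec (0 : M) <= Km)%MS.
Proof. by rewrite linear0 sub0mx. Qed.

Definition cosK B : {set M} := [set X : M | (mxvec (X - B) <= Km)%MS].

Lemma cosK_refl B : B \in cosK B.
Proof. by rewrite inE subrr K0. Qed.

Lemma cosK_eqP B B' : reflect (cosK B = cosK B') (mxvec (B - B') <= Km)%MS.
Proof.
apply: (iffP idP) => [h|h]; last first.
  by have := cosK_refl B; rewrite h inE.
apply/setP=> X; rewrite !inE; apply/idP/idP => hX.
  have := K_sub hX (K_sub K0 h); rewrite sub0r opprK.
  by rewrite addrA subrK.
by have := K_sub hX h; rewrite opprB addrA subrK.
Qed.

Definition actA := TotalAction (@act1 F n) (fun A s t => esym (actM A s t)).

Lemma actAE A s : actA A s = act A s. Proof. by []. Qed.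

Lemma cos_act B s : (actA^*)%act (cosK B) s = cosK (act B s).
Proof.
apply/setP=> X; rewrite /= /setact; apply/imsetP/idP => [[Z hZ ->]|hX].
  by rewrite inE actAE -actB K_act //; rewrite inE in hZ.
exists (act X (s^-1)%g); last by rewrite actAE actM mulVg act1.
by rewrite inE; move: hX; rewrite inE => /(K_act (s^-1)%g); rewrite actB actK.
Qed.

Definition Cos : {set {set M}} := [set cosK B | B : M].

Lemma acts_Cos : [acts [set: {perm 'I_n}], on Cos | actA^*].
Proof.
apply/subsetP=> s _ /[!inE]; apply/subsetP=> C /imsetP [B _ ->].
rewrite inE cos_act; exact: imset_f.
Qed.

Lemma acts_Eul : [acts [set: {perm 'I_n}], on EulAlt_ | actA].
Proof.
apply/subsetP=> s _ /[!inE]; apply/subsetP=> A hA.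
rewrite inE actAE; exact: EulAlt_act.
Qed.

Lemma card_vec (P : pred M) :
  #|[set B : M | P B]| = #|[set v : 'rV[F]_N | P (vec_mx v)]|.
Proof.
have -> : [set v : 'rV[F]_N | P (vec_mx v)] = mxvec @: [set B : M | P B].
  apply/setP=> v; rewrite inE; apply/idP/imsetP => [hv|[B hB ->]].
    by exists (vec_mx v); rewrite ?inE // vec_mxK.
  by rewrite mxvecK; rewrite inE in hB.
by rewrite card_imset //; apply: (can_inj (@mxvecK F n n)).
Qed.

Lemma card_cosK B : #|cosK B| = #|[set v : 'rV[F]_N | (v <= Km)%MS]|.
Proof.
rewrite /cosK card_vec.
have -> : [set v : 'rV[F]_N | (mxvec (vec_mx v - B) <= Km)%MS] =
          [set v + mxvec B | v in [set v : 'rV[F]_N | (v <= Km)%MS]].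
  apply/setP=> v; rewrite inE; apply/idP/imsetP => [h|[w hw ->]].
    by rewrite linearB /= vec_mxK in h; exists (v - mxvec B); rewrite ?inE ?subrK.
  by rewrite linearB /= !vec_mxK addrK; rewrite inE in hw.
by rewrite card_imset //; apply: addIr.
Qed.

Lemma fix_cos s :
  (#|('Fix_(Cos | actA^*)[s])%g| * #|[set v : 'rV[F]_N | (v <= Km)%MS]|)%N =
  #|[set B : M | (mxvec (act B s - B) <= Km)%MS]|.
Proof.
set Q := [set B : M | _].
symmetry; apply: card_uniform_partition.
  by move=> C /setIP [/imsetP [B _ ->] _]; rewrite card_cosK.
apply/and3P; split.
- apply/eqP/setP=> X; apply/bigcupP/idP => [[C /setIP [/imsetP [B _ ->]]]|hX].
    move=> /afix1P; rewrite cos_act => hfix hXB.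
    have e : cosK X = cosK B by apply/cosK_eqP; rewrite inE in hXB.
    rewrite inE.
    have h1 : (mxvec (act B s - B) <= Km)%MS by apply/cosK_eqP.
    have h2 : (mxvec (X - B) <= Km)%MS by rewrite inE in hXB.
    rewrite (zid _ (act B s) _ B) -actB.
    by apply: K_sub => //; apply: K_add => //; apply: K_act.
  exists (cosK X); last exact: cosK_refl.
  rewrite inE imset_f //=; apply/afix1P; rewrite cos_act; apply/esym/cosK_eqP.
  by rewrite -[mxvec _]opprK eqmx_opp -linearN opprB; rewrite inE in hX.
- apply/trivIsetP => C D /setIP [/imsetP [B _ ->] _] /setIP [/imsetP [B' _ ->] _] hne.
  apply/pred0P=> X /=; apply/negbTE/negP => /andP [h1 h2].
  move/negP: hne; apply; apply/eqP.
  have e1 : cosK X = cosK B by apply/cosK_eqP; rewrite inE in h1.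
  have e2 : cosK X = cosK B' by apply/cosK_eqP; rewrite inE in h2.
  by rewrite -e1 e2.
- apply/negP=> /setIP [/imsetP [B _ hB] _].
  by have := cosK_refl B; rewrite -hB inE.
Qed.


Lemma fix_eq s :
  #|('Fix_(Cos | actA^*)[s])%g| = #|('Fix_(EulAlt_ | actA)[s])%g|.
Proof.
have hK : (0 < #|[set v : 'rV[F]_N | (v <= Km)%MS]|)%N.
  by apply/card_gt0P; exists 0; rewrite inE sub0mx.
have e1 := fix_cos s.
have e2 : #|[set B : M | (mxvec (act B s - B) <= Km)%MS]| =
          #|[set v : 'rV[F]_N | (v *m (Pm s - 1%:M) <= Km)%MS]|.
  rewrite card_vec; apply: eq_card => v; rewrite !inE.
  by rewrite mulmxBr mulmx1 Pm_mul /actv linearB /= vec_mxK.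
have e3 : #|('Fix_(EulAlt_ | actA)[s])%g| =
   #|[set v : 'rV[F]_N | (v *m (Pm s - 1%:M) == 0) && (v *m Km^T == 0)]|.
  have -> : ('Fix_(EulAlt_ | actA)[s])%g = [set B : M | (act B s == B) && (B \in EulAlt_)].
    apply/setP=> B; rewrite [in RHS]in_set in_setI andbC; congr (_ && _).
    by apply/afix1P/eqP.
  rewrite card_vec; apply: eq_card => v; rewrite [X in X = _]in_set [X in _ = X]in_set.
  rewrite mulmxBr mulmx1 Pm_mul subr_eq0 -perp_Km vec_mxK /actv.
  by rewrite -(inj_eq (can_inj (@vec_mxK F n n))) mxvecK.
have e4 := key_count Km (Pm_inv s) (Pm_inv' s) (Pm_tr s).
rewrite e3; apply/eqP; rewrite -(eqn_pmul2r hK) e1 e2 e4 mulnC.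
done.
Qed.

Definition Up A : M := \matrix_(i, j) (if (i < j)%N then A i j else 0).

Lemma UpE A : A \in Alt_ -> Up A - (Up A)^T = A.
Proof.
move=> /AltP [h1 h2]; apply/matrixP=> i j; rewrite !mxE.
case: (ltngtP i j) => h.
- by rewrite subr0.
- by rewrite sub0r; apply/eqP; rewrite eq_sym -addr_eq0 h2.
- have e : i = j by apply: val_inj.
  by rewrite e subrr h1.
Qed.

Variable ek : F -> nat.
Hypothesis ek_pos : forall x, (0 < ek x)%N.
Hypothesis ekE : forall x, (ek x)%:R = x.

Lemma card_ker (T U1 U2 : finType) (S : {set T}) (f : T -> U1) (g : T -> U2) :
  {in S &, forall x y, (f x == f y) = (g x == g y)} -> #|f @: S| = #|g @: S|.
Proof.
move=> hfg.
have cnt (U : finType) (h : T -> U) :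
    #|h @: S| = #|[set [set y in S | h x == h y] | x in S]|.
  rewrite -(card_in_imset (f := fun z : U => [set y in S | z == h y]) (D := h @: S)).
    by rewrite -imset_comp.
  move=> z z' /imsetP [x xS ->] /imsetP [x' x'S ->] e.
  have : x \in [set y in S | h x == h y] by rewrite inE xS eqxx.
  by rewrite e inE => /andP [_ /eqP].
rewrite (cnt _ f) (cnt _ g).
suff -> : [set [set y in S | f x == f y] | x in S] = [set [set y in S | g x == g y] | x in S] by [].
apply: eq_in_imset => x xS; apply/setP=> y.
by rewrite !inE; case yS: (y \in S) => //=; apply: hfg.
Qed.

Lemma num_iso_orbits :
  num_iso_eulerian_classesG F n = #|orbit actA [set: {perm 'I_n}] @: EulAlt_|.
Proof.
rewrite /num_iso_eulerian_classesG.
suff -> : [set [set B in EulAlt_ | `[< isoG A B >]] | A in EulAlt_] =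
  orbit actA [set: {perm 'I_n}] @: EulAlt_ by [].
apply: eq_in_imset => A hA.
apply/setP=> X; rewrite inE; apply/andP/imsetP => [[hX /asboolP /isoP [s ->]]|[s _ ->]].
  by exists s.
by split; [apply: EulAlt_act | apply/asboolP/isoP; exists s].
Qed.

Lemma Alt_BT B : B - B^T \in Alt_.
Proof.
apply/AltP; split=> [i|i j]; rewrite !mxE ?subrr //.
by rewrite -opprB addNr.
Qed.

Lemma num_switch_orbits :
  num_switch_classesG F n = #|orbit (actA^*)%act [set: {perm 'I_n}] @: Cos|.
Proof.
have -> : orbit (actA^*)%act [set: {perm 'I_n}] @: Cos =
          [set orbit (actA^*)%act [set: {perm 'I_n}] (cosK (Up A)) | A in Alt_].
  rewrite -imset_comp; apply/setP=> O; apply/imsetP/imsetP => [[B _ ->]|[A hA ->]].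
    exists (B - B^T); first exact: Alt_BT.
    congr orbit; apply/cosK_eqP/Km_mem; exists 0; rewrite Xc0.
    have := UpE (Alt_BT B); set U := Up _ => hU.
    by rewrite linearB /= zid2 hU subrr.
  by exists (Up A).
rewrite /num_switch_classesG; apply: card_ker => A A' hA hA'.
have hse := switch_equivP ek_pos ekE A A'.
transitivity `[< switch_equivG A A' >].
  apply/eqP/asboolP => [e|h].
    have : A' \in [set B in Alt_ | `[< switch_equivG A' B >]].
      by rewrite inE hA'; apply/asboolP; apply: se_refl.
    by rewrite -e inE => /andP [_ /asboolP].
  apply/setP=> B; rewrite [X in X = _]in_set [X in _ = X]in_set; case: (B \in Alt_) => //=.
  apply/asboolP/asboolP => h'.
    exact (se_trans ek_pos ekE (se_sym ek_pos ekE h) h').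
  exact (se_trans ek_pos ekE h h').
apply/asboolP/eqP => [/hse [c [s hs]]|].
  apply/orbit_eqP; apply/imsetP; exists s; first by rewrite inE.
  rewrite cos_act; apply/cosK_eqP/Km_mem.
  exists (- c); rewrite linearB /= zid2 (UpE hA) act_tr -actB (UpE hA') -hs -XcN.
  by rewrite opprD addrA subrr add0r.
move=> /orbit_eqP /imsetP [s _ e]; apply/hse.
move: e; rewrite cos_act => /cosK_eqP /Km_mem [c hc].
rewrite linearB /= zid2 (UpE hA) act_tr -actB (UpE hA') in hc.
by exists (- c), s; rewrite -XcN -hc opprB addrC subrK.
Qed.

Lemma prime_case : num_switch_classesG F n = num_iso_eulerian_classesG F n.
Proof.
rewrite num_switch_orbits num_iso_orbits.
have h1 := Frobenius_Cauchy acts_Cos.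
have h2 := Frobenius_Cauchy acts_Eul.
have e : \sum_(a in [set: {perm 'I_n}]) #|('Fix_(Cos | actA^*)[a])%g| =
         \sum_(a in [set: {perm 'I_n}]) #|('Fix_(EulAlt_ | actA)[a])%g|.
  by apply: eq_bigr => s _; apply: fix_eq.
rewrite h1 h2 in e; apply/eqP; rewrite -(eqn_pmul2r (cardG_gt0 [set: {perm 'I_n}]%G)).
by apply/eqP.
Qed.

End Prime.

Theorem corollary4p8 (l n : nat) :
  (2 <= l)%N -> (1 <= n)%N -> (coprime l n || prime l) ->
  num_switch_classes l n = num_iso_eulerian_classes l n.
Proof.
move=> hl _ /orP [cop | pl].
  change (num_switch_classesG 'Z_l n = num_iso_eulerian_classesG 'Z_l n).
  apply: (@coprime_case _ _ (fun x : 'Z_l => (x : nat) + l)%N).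
  - by move=> x; rewrite addn_gt0 (leq_trans _ hl) ?orbT.
  - by move=> x; rewrite natrD natr_Zp pchar_Zp // addr0.
  - by rewrite unitZpE.
rewrite -(pdiv_id pl).
change (num_switch_classesG 'F_l n = num_iso_eulerian_classesG 'F_l n).
apply: (@prime_case _ _ (fun x : 'F_l => (x : nat) + l)%N).
- by move=> x; rewrite addn_gt0 (leq_trans _ hl) ?orbT.
- by move=> x; rewrite natrD natr_Zp pchar_Fp_0 // addr0.
Qed.
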